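(* Let $\mathcal{X}$ be a measurable space, $K\ge 1$, and let classifiers be measurable maps $\mathcal{X}\to[K]=\{1,\dots,K\}$. Let $\mathcal{B}$ assign to each $x\in\mathcal{X}$ a set $\mathcal{B}(x)\subseteq\mathcal{X}$, and for $V\subseteq\mathcal{X}$ let $\mathcal{N}(V)=\{x\in\mathcal{X}:\exists x'\in V \text{ with } \mathcal{B}(x)\cap\mathcal{B}(x')\neq\emptyset\}$. Fix a classifier $G_{pl}$ (the pseudo-labeler). Let $Q$ be a probability measure on $\mathcal{X}$ satisfying the $c$-expansion property for a non-increasing function $c:[0,1]\to(0,\infty)$, i.e. $Q(\mathcal{N}(S))\ge c(Q(S))\,Q(S)$ for every measurable $S\subseteq\mathcal{X}$. Let $H$ be a classifier and put $\gamma_H=c\big(Q(\{x\in\mathcal{X}:G_{pl}(x)\neq H(x)\})\big)$, and assume $\gamma_H>1$. For a classifier $F$ let $\mathcal{S}_{\mathcal{B}}(F)=\{x\in\mathcal{X}: F(x)=F(x')\ \forall x'\in\mathcal{B}(x)\}$ and let $\mathcal{S}_{\mathcal{B}}^c(F)$ be its complement. For a classifier $F$ define $$\mathcal{L}_{Q,H}(F)=\frac{\gamma_H+1}{\gamma_H-1}Q(\{x:F(x)\neq G_{pl}(x)\})+\frac{2\gamma_H}{\gamma_H-1}Q(\mathcal{S}_{\mathcal{B}}^c(F))+\frac{2\gamma_H}{\gamma_H-1}Q(\mathcal{S}_{\mathcal{B}}^c(H))-Q(\{x:G_{pl}(x)\neq H(x)\}).$$ Then for every classifier $F$, $Q(\{x\in\mathcal{X}:F(x)\neq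 H(x)\})\le\mathcal{L}_{Q,H}(F)$.
   Context: All sets considered are assumed measurable. $\mathcal{B}(x)$ is interpreted as the set of (augmented) neighbors of $x$; $\mathcal{N}(V)$ is the neighborhood of a set $V$. *)

(* Defs.v *)
From HB Require Import structures.
From mathcomp Require Import all_boot all_order all_algebra.
From mathcomp Require Import all_classical all_reals all_analysis.
Set Implicit Arguments. Unset Strict Implicit. Unset Printing Implicit Defensive.
Import Order.TTheory GRing.Theory Num.Theory.
Local Open Scope classical_set_scope.
Local Open Scope ring_scope.

(* A classifier X -> [K] (here [K] is represented by 'I_K = {0,..,K-1}),
   measurable w.r.t. the discrete sigma-algebra on [K]. *)
Definition classifier d (T : measurableType d) (K : nat) (F : T -> 'I_K) : Prop :=
  forall k : 'I_K, measurable (F @^-1` [set k]).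

Definition nbhd_set (T : Type) (B : T -> set T) (V : set T) : set T :=
  [set x | exists2 x', V x' & B x `&` B x' !=set0].

Definition robust_set (T : Type) (K : nat) (B : T -> set T) (F : T -> 'I_K) : set T :=
  [set x | forall x', B x x' -> F x = F x'].

Definition prb d (T : measurableType d) (R : realType) (Q : probability T R)
  (A : set T) : R := fine (Q A).

Definition LQH d (T : measurableType d) (R : realType) (K : nat)
  (B : T -> set T) (Gpl H : T -> 'I_K) (Q : probability T R) (c : R -> R)
  (F : T -> 'I_K) : R :=
  let g := c (prb Q [set x | Gpl x <> H x]) in
  (g + 1) / (g - 1) * prb Q [set x | F x <> Gpl x]
  + (2 * g) / (g - 1) * prb Q (~` robust_set B F)
  + (2 * g) / (g - 1) * prb Q (~` robust_set B H)
  - prb Q [set x | Gpl x <> H x].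

(* Main.v *)
Require Import Defs.
From HB Require Import structures.
From mathcomp Require Import all_boot all_order all_algebra.
From mathcomp Require Import all_classical all_reals all_analysis.
From mathcomp Require Import ring lra.
Import Order.TTheory GRing.Theory Num.Theory.
Local Open Scope classical_set_scope.
Local Open Scope ring_scope.

Lemma arith (R : realFieldType) (g u a b h x p1 p2 : R) :
  0 < g - 1 -> 0 <= u -> 0 <= b -> 0 <= h -> 0 <= p1 -> 0 <= p2 ->
  p1 + p2 <= a -> x <= u + b + h -> g * u <= u + a + b + h ->
  (g - 1) * (x + p1) <= (g + 1) * a + 2 * g * b + 2 * g * h - (g - 1) * (x + p2).
Proof.
move=> g0 u0 b0 h0 p10 p20 pa xu gu.
have h1 : (g - 1) * x <= (g - 1) * (u + b + h) by rewrite ler_wpM2l // ltW.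
have h2 : (g - 1) * (p1 + p2) <= (g - 1) * a by rewrite ler_wpM2l // ltW.
lra.
Qed.

Section Helpers.
Context (d : measure_display) (T : measurableType d) (R : realType) (Q : probability T R).

Lemma prbE (A : set T) : measurable A -> ((prb Q A)%:E = Q A)%E.
Proof. by move=> mA; rewrite /prb fineK //; apply: fin_num_measure. Qed.

Lemma prb_ge0 (A : set T) : measurable A -> 0 <= prb Q A.
Proof. by move=> mA; rewrite -lee_fin prbE. Qed.

Lemma prb_le (A B : set T) : measurable A -> measurable B -> A `<=` B ->
  prb Q A <= prb Q B.
Proof. by move=> mA mB AB; rewrite -lee_fin !prbE //; apply: le_measure => //; rewrite inE. Qed.

Lemma prb_le1 (A : set T) : measurable A -> prb Q A <= 1.
Proof. by move=> mA; rewrite -lee_fin prbE //; apply: probability_le1. Qed.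

Lemma prb_U (A B : set T) : measurable A -> measurable B ->
  prb Q (A `|` B) <= prb Q A + prb Q B.
Proof. by move=> mA mB; rewrite -lee_fin EFinD !prbE //; [apply: measureU2 => //|exact: measurableU]. Qed.

Lemma prb_Ud (A B : set T) : measurable A -> measurable B -> A `&` B = set0 ->
  prb Q (A `|` B) = prb Q A + prb Q B.
Proof.
by move=> mA mB AB; apply/EFin_inj; rewrite EFinD !prbE ?measureU //; exact: measurableU.
Qed.
End Helpers.

Lemma neq_meas d (T : measurableType d) K (F H : T -> 'I_K) :
  classifier F -> classifier H -> measurable [set x | F x <> H x].
Proof.
move=> cF cH.
have -> : [set x | F x <> H x] =
  \bigcup_(k in [set: 'I_K]) (F @^-1` [set k] `&` ~` (H @^-1` [set k])).
  apply/seteqP; split => x /=.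
    by move=> ne; exists (F x) => //=; split => //= e; apply: ne.
  by move=> [k _ [/= -> /= e]] e'; apply: e; rewrite e'.
apply: fin_bigcup_measurable; first exact: finite_finset.
by move=> k _; apply: measurableI => //; apply: measurableC.
Qed.

Theorem mainTheorem1 (d : measure_display) (T : measurableType d) (R : realType)
  (K : nat) (HK : (1 <= K)%N) (B : T -> set T) (Gpl : T -> 'I_K)
  (Q : probability T R) (c : R -> R) (H : T -> 'I_K) :
  classifier Gpl -> classifier H ->
  (* all sets considered are measurable *)
  (forall S : set T, measurable S -> measurable (nbhd_set B S)) ->
  measurable (robust_set B H) ->
  (* c : [0,1] -> (0, oo), non-increasing *)
  (forall t : R, 0 <= t <= 1 -> 0 < c t) ->
  (forall s t : R, 0 <= s -> s <= t -> t <= 1 -> c t <= c s) ->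
  (* c-expansion *)
  (forall S : set T, measurable S ->
     c (prb Q S) * prb Q S <= prb Q (nbhd_set B S)) ->
  1 < c (prb Q [set x | Gpl x <> H x]) ->
  forall F : T -> 'I_K, classifier F -> measurable (robust_set B F) ->
    prb Q [set x | F x <> H x] <= LQH B Gpl H Q c F.
Proof.
move=> cG cH mN mSH cpos cmono cexp g1 F cF mSF.
set D := [set x | F x <> H x].
set E := [set x | Gpl x <> H x].
set A := [set x | F x <> Gpl x].
set SF := robust_set B F. set SH := robust_set B H.
have mD : measurable D by exact: neq_meas.
have mE : measurable E by exact: neq_meas.
have mA : measurable A by exact: neq_meas.
have mSFc : measurable (~` SF) by exact: measurableC.
have mSHc : measurable (~` SH) by exact: measurableC.
set U := D `&` E `&` SF `&` SH.
have mU : measurable U by repeat apply: measurableI.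
have mDE : measurable (D `&` E) by apply: measurableI.
have mP1 : measurable (D `&` ~` E) by apply: measurableI => //; apply: measurableC.
have mP2 : measurable (E `&` ~` D) by apply: measurableI => //; apply: measurableC.
have eD : prb Q D = prb Q (D `&` E) + prb Q (D `&` ~` E).
  rewrite -prb_Ud //; first by rewrite -setIUr setUv setIT.
  by apply/seteqP; split=> // x /= [[? ?] [? ?]].
have eE : prb Q E = prb Q (D `&` E) + prb Q (E `&` ~` D).
  rewrite -prb_Ud //; first by rewrite setIC -setIUr setUv setIT.
  by apply/seteqP; split=> // x /= [[? ?] [? ?]].
have ePA : prb Q (D `&` ~` E) + prb Q (E `&` ~` D) <= prb Q A.
  rewrite -prb_Ud //; last first.
    by apply/seteqP; split=> // x /= [[? ?] [? ?]].
  apply: prb_le => //; first exact: measurableU.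
  move=> x [[/= dx ex]|[/= ex dx]] /= fg.
    by apply: ex => e; apply: dx; rewrite fg.
  by apply: dx => e; apply: ex; rewrite -fg.
have eDE : prb Q (D `&` E) <= prb Q U + prb Q (~` SF) + prb Q (~` SH).
  apply: le_trans (_ : prb Q (U `|` ~` SF `|` ~` SH) <= _).
    apply: prb_le => //; first by repeat apply: measurableU.
    move=> x [dx ex].
    have [sf|nsf] := pselect (SF x); last by left; right.
    have [sh|nsh] := pselect (SH x); last by right.
    by left; left.
  apply: le_trans; first apply: prb_U => //; first exact: measurableU.
  by rewrite lerD2r; apply: prb_U.
have eN : nbhd_set B U `<=` U `|` A `|` ~` SF `|` ~` SH.
  move=> x [x' [[[dx' ex'] sfx'] shx'] [z [bxz bx'z]]].
  have [sf|nsf] := pselect (SF x); last by left; right.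
  have [sh|nsh] := pselect (SH x); last by right.
  left; left.
  have dx : D x.
    rewrite /D /= (sf z bxz) (sh z bxz) -(sfx' z bx'z) -(shx' z bx'z); exact: dx'.
  have [ex|nex] := pselect (E x); first by left; split.
  right => fg; apply: dx; rewrite fg.
  by apply: contrapT => e; apply: nex.
have eN2 : prb Q (nbhd_set B U) <= prb Q U + prb Q A + prb Q (~` SF) + prb Q (~` SH).
  have mV : measurable (U `|` A `|` ~` SF `|` ~` SH) by repeat apply: measurableU.
  have := @prb_le _ _ _ Q _ _ (mN _ mU) mV eN. move=> hh. apply: le_trans hh _.
  apply: le_trans; first apply: prb_U => //; first by repeat apply: measurableU.
  rewrite lerD2r.
  apply: le_trans; first apply: prb_U => //; first by repeat apply: measurableU.
  by rewrite lerD2r; apply: prb_U.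
have UE : prb Q U <= prb Q E.
  by apply: prb_le => // x [[[]]].
have cU : c (prb Q E) <= c (prb Q U).
  by apply: cmono => //; [exact: prb_ge0 | exact: prb_le1].
have gU : c (prb Q E) * prb Q U <= prb Q U + prb Q A + prb Q (~` SF) + prb Q (~` SH).
  apply: le_trans (eN2); apply: le_trans (cexp _ mU).
  by apply: ler_wpM2r => //; apply: prb_ge0.
rewrite /LQH -/E -/A -/SF -/SH -/D.
set g := c (prb Q E) in g1 cU gU *.
move: (@prb_ge0 _ _ _ Q _ mU) (@prb_ge0 _ _ _ Q _ mSFc) (@prb_ge0 _ _ _ Q _ mSHc) (@prb_ge0 _ _ _ Q _ mP1)
  (@prb_ge0 _ _ _ Q _ mP2) eD eE ePA eDE gU.
set u := prb Q U; set a := prb Q A; set b := prb Q (~` SF); set h := prb Q (~` SH).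
set x := prb Q (D `&` E); set p1 := prb Q (D `&` ~` E); set p2 := prb Q (E `&` ~` D).
move=> u0 b0 h0 p10 p20 -> -> pa xu gu.
have g0 : 0 < g - 1 by rewrite subr_gt0.
have key : (g - 1) * (x + p1) <= (g + 1) * a + 2 * g * b + 2 * g * h - (g - 1) * (x + p2).
  exact: (@arith _ _ _ _ _ _ _ _ _ g0 u0 b0 h0 p10 p20 pa xu gu).
rewrite -(ler_pM2l g0).
have -> : (g - 1) * ((g + 1) / (g - 1) * a + 2 * g / (g - 1) * b + 2 * g / (g - 1) * h - (x + p2))
   = (g + 1) * a + 2 * g * b + 2 * g * h - (g - 1) * (x + p2).
  by field; rewrite lt0r_neq0.
exact: key.
Qed.
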